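(* Let $1\le d\le D$ be integers, let $k$ be a field with $|k|\ge D+1$, let $A$ be a $k$-algebra and let $a_1,\ldots,a_m\in A$. Assume that for all $\alpha_1,\ldots,\alpha_m\in k$ the element $\alpha_1a_1+\cdots+\alpha_ma_m$ is algebraic over $k$ of degree at most $d$. Then $P_D(a_1,\ldots,a_m)\subseteq P_{\le d-1}(a_1,\ldots,a_m)$.
   Context: Algebras are associative with unit. For nonnegative integers $i_1,\ldots,i_m$, $p_{i_1,\ldots,i_m}(x_1,\ldots,x_m)$ is the sum of all distinct noncommutative monomials with exactly $i_j$ occurrences of $x_j$ for each $j$ ($p_{0,\ldots,0}=1$); $p_{i_1,\ldots,i_m}(a_1,\ldots,a_m)$ is its evaluation at $x_j=a_j$. $P_n(a_1,\ldots,a_m)=\operatorname{span}_k\{p_{i_1,\ldots,i_m}(a_1,\ldots,a_m)\mid i_1+\cdots+i_m=n\}$ and $P_{\le r}(a_1,\ldots,a_m)=\sum_{n=0}^rP_n(a_1,\ldots,a_m)$. An element $u$ is algebraic of degree at most $d$ if it is a root of a nonzero polynomial in $k[t]$ of degree at most $d$. *)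

(* Defs.v *)
From HB Require Import structures.
From mathcomp Require Import all_boot all_order all_algebra.
Set Implicit Arguments. Unset Strict Implicit. Unset Printing Implicit Defensive.
Import Order.TTheory GRing.Theory.
Local Open Scope ring_scope.

Section Defs.
Variables (k : fieldType) (A : algType k) (m : nat).

(* p_{i_1..i_m}(a_1..a_m): sum over all words w in the alphabet 'I_m of length
   i_1+...+i_m with exactly i_j occurrences of letter j, of a_{w_1}...a_{w_n}.
   Distinct noncommutative monomials <-> distinct such words. *)
Definition pev (a : 'I_m -> A) (i : 'I_m -> nat) : A :=
  \sum_(w : (\sum_(j < m) i j)%N.-tuple 'I_m | [forall j, count_mem j w == i j])
     \prod_(x <- w) a x.

(* x \in P_n(a) : x is a k-linear combination of the p_i(a) with |i| = n
   (every such i has all entries <= n, hence is an element of {ffun 'I_m -> 'I_n.+1}). *)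
Definition inP (a : 'I_m -> A) (n : nat) (x : A) : Prop :=
  exists c : {ffun 'I_m -> 'I_n.+1} -> k,
    x = \sum_(i : {ffun 'I_m -> 'I_n.+1} | (\sum_(j < m) (i j : nat) == n)%N)
          c i *: pev a (fun j => i j).

Definition inPle (a : 'I_m -> A) (r : nat) (x : A) : Prop :=
  exists xs : 'I_r.+1 -> A, (forall n : 'I_r.+1, inP a n (xs n)) /\
    x = \sum_(n < r.+1) xs n.

End Defs.

Definition algebraic_le (k : fieldType) (A : algType k) (d : nat) (u : A) : Prop :=
  exists q : {poly k}, q != 0 /\ (size q <= d.+1)%N /\ horner_alg u q = 0.

(* Main.v *)
Require Import Defs.
From HB Require Import structures.
From mathcomp Require Import all_boot all_order all_algebra.
Import GRing.Theory.
Local Open Scope ring_scope.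

Section Aux.
Variables (k : fieldType) (A : algType k) (m : nat).

Lemma prod_seq_count (F : 'I_m -> k) (w : seq 'I_m) :
  \prod_(x <- w) F x = \prod_(j < m) F j ^+ count_mem j w.
Proof.
elim: w => [|x w IH].
  by rewrite big_nil big1 // => j _; rewrite expr0.
rewrite big_cons IH /=.
under [RHS]eq_bigr do rewrite exprD.
rewrite big_split /=; congr (_ * _).
rewrite (bigD1 x) //= eqxx expr1 big1 ?mulr1 // => j.
by rewrite eq_sym => /negbTE ->; rewrite expr0.
Qed.

Lemma sum_count (w : seq 'I_m) : (\sum_(j < m) count_mem j w)%N = size w.
Proof.
elim: w => [|x w IH]; first by rewrite big1.
rewrite /= big_split /= IH (bigD1 x) //= eqxx big1 // => j.
by rewrite eq_sym => /negbTE ->.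
Qed.

Lemma pow_sum_tuple (b : 'I_m -> A) n :
  (\sum_(j < m) b j) ^+ n = \sum_(w : n.-tuple 'I_m) \prod_(x <- w) b x.
Proof.
elim: n => [|n IH].
  rewrite expr0 (eq_bigr (fun _ => 1)); last first.
    by move=> w _; rewrite (tuple0 w) big_nil.
  by rewrite sumr_const card_tuple expn0.
rewrite exprS IH mulr_suml.
rewrite (reindex (fun p : 'I_m * n.-tuple 'I_m => [tuple of p.1 :: p.2])) /=.
  rewrite -(pair_big xpredT xpredT (fun j (w : n.-tuple _) => \prod_(x <- j :: w) b x)) /=; apply: eq_bigr => j _; rewrite mulr_sumr.
  by apply: eq_bigr => w _; rewrite big_cons.
apply: onW_bij.
exists (fun t : n.+1.-tuple 'I_m => (thead t, [tuple of behead t])).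
  by move=> [x w] /=; rewrite theadE; congr (_, _); apply: val_inj.
by move=> t /=; rewrite -tuple_eta.
Qed.

Lemma pevE (a : 'I_m -> A) (i : 'I_m -> nat) n : (\sum_(j < m) i j)%N = n ->
  pev a i = \sum_(w : n.-tuple 'I_m | [forall j, count_mem j w == i j])
     \prod_(x <- w) a x.
Proof. by move=> <-. Qed.

Definition cnt n (w : n.-tuple 'I_m) : {ffun 'I_m -> 'I_n.+1} :=
  [ffun j => inord (count_mem j w)].
Arguments cnt {n}.

Lemma cnt_val n (w : n.-tuple 'I_m) j : (cnt w j : nat) = count_mem j w.
Proof.
rewrite ffunE inordK // ltnS; have := count_size (pred1 j) w; by rewrite size_tuple.
Qed.

Lemma cnt_eq n (w : n.-tuple 'I_m) (i : {ffun 'I_m -> 'I_n.+1}) :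
  (cnt w == i) = [forall j, count_mem j w == i j].
Proof.
apply/eqP/forallP => [<- j|H]; first by rewrite cnt_val.
by apply/ffunP => j; apply: val_inj; rewrite /= cnt_val; apply/eqP.
Qed.

Lemma expand (al : 'I_m -> k) (a : 'I_m -> A) n :
  (\sum_(j < m) al j *: a j) ^+ n =
  \sum_(i : {ffun 'I_m -> 'I_n.+1} | (\sum_(j < m) (i j : nat) == n)%N)
     (\prod_(j < m) al j ^+ i j) *: pev a (fun j => i j).
Proof.
rewrite pow_sum_tuple.
have H w : \prod_(x <- w) (al x *: a x) =
           (\prod_(x <- w) al x) *: \prod_(x <- w) a x.
  elim: w => [|x w IH]; first by rewrite !big_nil scale1r.
  by rewrite !big_cons IH -scalerAl -scalerAr scalerA.
under eq_bigr do rewrite H.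
rewrite (partition_big (@cnt n) (fun i => \sum_(j < m) (i j : nat) == n)%N) /=;
  last first.
  move=> w _; apply/eqP.
  under eq_bigr do rewrite cnt_val.
  by rewrite sum_count size_tuple.
apply: eq_bigr => i /eqP Hi; rewrite (pevE _ _ _ Hi) scaler_sumr.
apply: eq_big => w; first by rewrite cnt_eq.
rewrite cnt_eq => /forallP Hw; congr (_ *: _); rewrite prod_seq_count.
by apply: eq_bigr => j _; rewrite (eqP (Hw j)).
Qed.

End Aux.

Section VSpace.
Variables (k : fieldType) (A : algType k) (m : nat) (a : 'I_m -> A) (r : nat).

Lemma inP0 n : inP a n 0.
Proof. by exists (fun _ => 0); rewrite big1 // => i _; rewrite scale0r. Qed.

Lemma inPD n x y : inP a n x -> inP a n y -> inP a n (x + y).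
Proof.
move=> [c ->] [c' ->]; exists (fun i => c i + c' i).
by rewrite -big_split /=; apply: eq_bigr => i _; rewrite scalerDl.
Qed.

Lemma inPZ n (l : k) x : inP a n x -> inP a n (l *: x).
Proof.
move=> [c ->]; exists (fun i => l * c i).
by rewrite scaler_sumr; apply: eq_bigr => i _; rewrite scalerA.
Qed.

Lemma V0 : inPle a r 0.
Proof. by exists (fun _ => 0); split; [move=> n; apply: inP0 | rewrite big1]. Qed.

Lemma VD x y : inPle a r x -> inPle a r y -> inPle a r (x + y).
Proof.
move=> [xs [Hx ->]] [ys [Hy ->]]; exists (fun n => xs n + ys n); split.
  by move=> n; apply: inPD.
by rewrite big_split.
Qed.

Lemma VZ (l : k) x : inPle a r x -> inPle a r (l *: x).
Proof.
move=> [xs [Hx ->]]; exists (fun n => l *: xs n); split.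
  by move=> n; apply: inPZ.
by rewrite scaler_sumr.
Qed.

Lemma Vsum (I : finType) (P : pred I) (F : I -> A) :
  (forall i, P i -> inPle a r (F i)) -> inPle a r (\sum_(i | P i) F i).
Proof.
move=> H; apply: (big_ind (inPle a r)); [exact: V0 | exact: VD | exact: H].
Qed.

Lemma VP t y : (t <= r)%N -> inP a t y -> inPle a r y.
Proof.
move=> tr Hy; exists (fun n : 'I_r.+1 => if n == inord t then y else 0); split.
  move=> n; case: eqP => [->|_]; last exact: inP0.
  by rewrite inordK.
rewrite (bigD1 (inord t)) //= eqxx big1 ?addr0 // => n /negbTE -> //.
Qed.

End VSpace.

Lemma Vpow (k : fieldType) (A : algType k) (m : nat) (a : 'I_m -> A) d
  (al : 'I_m -> k) : (1 <= d)%N ->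
  algebraic_le d (\sum_(j < m) al j *: a j) ->
  forall n, inPle a d.-1 ((\sum_(j < m) al j *: a j) ^+ n).
Proof.
set u := \sum_(j < m) al j *: a j.
move=> d1 [q [q0 [sq hq]]] n.
have Hlow t : (t < d)%N -> inPle a d.-1 (u ^+ t).
  move=> td; apply: (@VP _ _ _ _ _ t); first by rewrite -ltnS prednK.
  by exists (fun i : {ffun 'I_m -> 'I_t.+1} => \prod_(j < m) al j ^+ i j); rewrite /u expand.
have -> : u ^+ n = horner_alg u ('X ^+ n) by rewrite rmorphXn /= horner_algX.
rewrite (divp_eq ('X ^+ n) q) rmorphD rmorphM /= hq mulr0 add0r.
set p := _ %% q.
have sp : (size p <= d)%N.
  by rewrite -ltnS; apply: leq_trans sq; rewrite ltn_modp.
rewrite -[p]coefK poly_def linear_sum /=.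
apply: Vsum => t _; rewrite linearZ /= mulr_algl rmorphXn /= horner_algX.
by apply: VZ; apply: Hlow; apply: leq_trans (ltn_ord t) sp.
Qed.

Lemma interp (k : fieldType) (D : nat) (s : seq k) : uniq s -> size s = D.+1 ->
  exists lam : 'I_D.+1 -> 'I_D.+1 -> k,
    forall e i : 'I_D.+1, \sum_(t < D.+1) lam e t * s`_t ^+ i = (i == e)%:R.
Proof.
move=> us ss.
set M := Vandermonde D.+1 (\row_(t < D.+1) s`_t).
have HM : M \in unitmx.
  rewrite unitmxE unitfE det_Vandermonde.
  apply/prodf_neq0 => i _; apply/prodf_neq0 => j ij; rewrite !mxE subr_eq0.
  apply/eqP => /eqP; rewrite nth_uniq ?ss // => /eqP /val_inj ji.
  by move: ij; rewrite ji ltnn.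
exists (fun e t => invmx M t e) => e i.
have /matrixP/(_ i e) := mulmxV HM; rewrite !mxE => <-.
by apply: eq_bigr => t _; rewrite mulrC !mxE.
Qed.

Theorem lemma3p2 (d D : nat) (k : fieldType) (A : algType k) (m : nat)
  (a : 'I_m -> A) :
  (1 <= d)%N -> (d <= D)%N ->
  (exists s : seq k, uniq s /\ size s = D.+1) ->
  (forall alpha : 'I_m -> k, algebraic_le d (\sum_(j < m) alpha j *: a j)) ->
  forall x : A, inP a D x -> inPle a d.-1 x.
Proof.
move=> d1 dD [s [us ss]] Halg x [c ->].
have [lam Hlam] := @interp k D s us ss; clear us ss.
apply: Vsum => i0 Hi0; apply: VZ.
have Hcoef (i : {ffun 'I_m -> 'I_D.+1}) :
    \sum_(f : {ffun 'I_m -> 'I_D.+1})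
       ((\prod_(j < m) lam (i0 j) (f j)) * \prod_(j < m) s`_(f j) ^+ i j)
    = (i == i0)%:R.
  under eq_bigr do rewrite -big_split /=.
  rewrite -(bigA_distr_bigA (fun j t => lam (i0 j) t * s`_t ^+ i j)) /=.
  under eq_bigr do rewrite Hlam.
  case: (eqVneq i i0) => [->|ne].
    by rewrite big1 // => j _; rewrite eqxx.
  have [j Hj] : exists j, i j != i0 j.
    apply/existsP; rewrite -negb_forall; apply: contra ne => /forallP H.
    by apply/eqP/ffunP => j; apply/eqP/H.
  by rewrite (bigD1 j) //= (negbTE Hj) mul0r.
have -> : pev a (fun j => i0 j) =
    \sum_(f : {ffun 'I_m -> 'I_D.+1})
      (\prod_(j < m) lam (i0 j) (f j)) *: (\sum_(j < m) s`_(f j) *: a j) ^+ D.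
  under eq_bigr do rewrite expand scaler_sumr.
  rewrite exchange_big /= (bigD1 i0 Hi0) /= [X in _ + X]big1 ?addr0.
    under eq_bigr do rewrite scalerA.
    by rewrite -scaler_suml Hcoef eqxx scale1r.
  move=> i /andP [_ ne]; under eq_bigr do rewrite scalerA.
  by rewrite -scaler_suml Hcoef (negbTE ne) scale0r.
apply: Vsum => f _; apply: VZ; apply: Vpow => //.
Qed.
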